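(* Let $k\geqslant 1$, let $n_1,\ldots,n_k$ be positive integers and $a_1,\ldots,a_k$ integers with $0\leqslant a_s<n_s$ for each $s$. Suppose that $p$ is a prime such that $$\sum_{s=1}^k\frac{e^{2\pi i a_s/p}}{1-e^{2\pi i n_s/p}}=0.$$ Then $$n_1+\cdots+n_k-k+1\geqslant |S(n_1,\ldots,n_k)|\geqslant p.$$
   Context: For positive integers $n_1,\ldots,n_k$, $S(n_1,\ldots,n_k)=\{r/n_s: r=0,\ldots,n_s-1;\ s=1,\ldots,k\}$, a set of rational numbers, and $|S(\cdot)|$ denotes its cardinality. (The hypothesis implicitly requires $p\nmid n_s$ for all $s$, so that the denominators are nonzero.) *)

(* Defs.v *)
From Stdlib Require Import Reals.
From Coquelicot Require Import Coquelicot.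
From mathcomp Require Import all_boot all_order all_algebra.

Set Implicit Arguments.
Unset Strict Implicit.
Unset Printing Implicit Defensive.

Definition cis (t : R) : C := (cos t, sin t).

Definition ep (p m : nat) : C := cis (Rdiv (Rmult (Rmult (IZR 2) PI) (INR m)) (INR p)).

(* S(n_1,...,n_k) = { r / n_s : 0 <= r < n_s, 1 <= s <= k } as a duplicate-free
   list of rationals; its cardinality is the size of this list. *)
Definition Sset (k : nat) (n : 'I_k -> nat) : seq rat :=
  undup [seq GRing.mul ((Posz r)%:Q) (GRing.inv ((Posz (n s))%:Q)) | s <- enum 'I_k, r <- iota 0 (n s)].

Definition Scard (k : nat) (n : 'I_k -> nat) : nat := size (Sset n).

(* Main.v *)
Require Import Defs.
From Stdlib Require Import Reals.
From Coquelicot Require Import Coquelicot.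
From mathcomp Require Import all_boot all_order all_algebra.
From mathcomp Require Import all_field.
From mathcomp Require Import Rstruct complex.
From mathcomp Require Import ring.
From Stdlib Require Import Lra.
Import Order.TTheory GRing.Theory Num.Theory.

Set Implicit Arguments.
Unset Strict Implicit.
Unset Printing Implicit Defensive.

Section Alg.
Local Open Scope ring_scope.
Lemma Phi1 : 'Phi_1 = 'X - 1.
Proof. by have := prod_Cyclotomic (ltn0Sn 0); rewrite big_seq1 expr1. Qed.

Lemma Phip_root (L : fieldType) (z : L) p : prime p -> p.-primitive_root z ->
  root (map_poly intr 'Phi_p) z.
Proof.
move=> pp pz.
have p0 := prime_gt0 pp.
have := prod_Cyclotomic p0 => /(congr1 (map_poly (intr : int -> L))).
rewrite rmorph_prod rmorphB rmorph1 /= rmorphXn /= map_polyX => E.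
have : root ('X^p - 1) z by rewrite /root !hornerE (prim_expr_order pz) subrr.
rewrite -E /root horner_prod => /eqP/eqP; rewrite prodf_seq_eq0 => /hasP [d dd /= /eqP Hd].
have dp : (d %| p)%N by rewrite dvdn_divisors.
have [d1|d1] := eqVneq d 1%N.
  move: Hd; rewrite d1 Phi1 rmorphB /= map_polyX rmorph1 !hornerE => /eqP; rewrite subr_eq0 => /eqP z1.
  have := prim_order_dvd pz 1; rewrite z1 expr1 eqxx dvdn1 => /eqP p1.
  by move: pp; rewrite p1.
by rewrite -(prime_nt_dvdP pp d1 dp) /root Hd.
Qed.

Lemma Phi_at1 d : (0 < d)%N -> d != 1%N -> ('Phi_d).[1] != 0 :> int.
Proof.
move=> d0 d1; apply/negP => /eqP H.
have [z pz] := C_prim_root_exists d0.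
have := Cintr_Cyclotomic pz => E.
have : root (cyclotomic z d) 1.
  by rewrite -E /root -[1 : algC](rmorph1 (intr : int -> algC)) horner_map H rmorph0.
rewrite root_cyclotomic // => /prim_order_dvd/(_ 1%N).
by rewrite expr1 eqxx dvdn1 (negbTE d1).
Qed.

Lemma irr (L : numFieldType) (z : L) p (q : {poly int}) : prime p -> p.-primitive_root z ->
  q != 0 -> root (map_poly intr q) z -> (p <= size q)%N.
Proof.
move=> pp pz q0 rq.
pose qQ : {poly rat} := map_poly intr q.
pose PQ : {poly rat} := map_poly intr 'Phi_p.
have mapE (F : numFieldType) (r : {poly int}) :
    map_poly (ratr : rat -> F) (map_poly intr r) = map_poly intr r.
  by rewrite -map_poly_comp; apply: eq_map_poly => x /=; rewrite rmorph_int.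
have szq : size qQ = size q by rewrite size_map_inj_poly //; apply: intr_inj.
have qQ0 : qQ != 0 by rewrite -size_poly_eq0 szq size_poly_eq0.
pose d := gcdp qQ PQ.
have d0 : d != 0 by rewrite gcdp_eq0 negb_and qQ0.
have rd : root (map_poly (ratr : rat -> L) d) z.
  by rewrite gcdp_map root_gcd !mapE rq Phip_root.
have sd : (1 < size d)%N.
  by rewrite -(size_map_poly (ratr : {rmorphism rat -> L})); apply: root_size_gt1 rd; rewrite map_poly_eq0.
pose dC := map_poly (ratr : rat -> algC) d.
have : size dC != 1%N by rewrite size_map_poly; case: (size d) sd => // [[]].
case/closed_rootP => x rx.
have [w pw] := C_prim_root_exists (prime_gt0 pp).
have rxP : root (map_poly (ratr : rat -> algC) PQ) x.
  by move: rx; rewrite /dC gcdp_map root_gcd => /andP[].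
have rxq : root (map_poly (ratr : rat -> algC) qQ) x.
  by move: rx; rewrite /dC gcdp_map root_gcd => /andP[].
have px : p.-primitive_root x.
  by move: rxP; rewrite mapE (Cintr_Cyclotomic pw) root_cyclotomic.
have [pf [Epf _] Hpf] := minCpolyP x.
have : (pf %| qQ) by rewrite -Hpf.
move/(dvdp_leq qQ0); rewrite szq; apply: leq_trans.
rewrite -(size_map_poly (ratr : {rmorphism rat -> algC})) -Epf (minCpoly_cyclotomic px).
by rewrite size_cyclotomic totient_prime // prednK // prime_gt0.
Qed.

Definition Dset k (n : 'I_k -> nat) : seq nat := undup (flatten [seq divisors (n s) | s <- enum 'I_k]).
Definition Dp k (n : 'I_k -> nat) : {poly int} := \prod_(d <- Dset n | d != 1%N) 'Phi_d.
Definition Qs k (n : 'I_k -> nat) (s : 'I_k) : {poly int} := \prod_(d <- Dset n | ~~ (d %| n s)%N) 'Phi_d.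
Definition Gp (R : nzRingType) m : {poly R} := \sum_(i < m) 'X^i.

Lemma mem_Dset k (n : 'I_k -> nat) d : (forall s, 0 < n s)%N ->
  (d \in Dset n) = [exists s, d %| n s]%N.
Proof.
move=> n0; rewrite mem_undup; apply/flattenP/existsP.
  by case=> l /mapP [s _ ->]; rewrite -dvdn_divisors //; exists s.
by case=> s ds; exists (divisors (n s)); [apply: map_f; rewrite mem_enum | rewrite -dvdn_divisors].
Qed.

Lemma Dset_gt0 k (n : 'I_k -> nat) d : (forall s, 0 < n s)%N -> d \in Dset n -> (0 < d)%N.
Proof.
move=> n0; rewrite mem_Dset // => /existsP [s ds].
by case: d ds => //; rewrite dvd0n => /eqP E; move: (n0 s); rewrite E.
Qed.

Lemma XG (R : idomainType) m : ('X - 1) * Gp R m = 'X^m - 1.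
Proof. by rewrite /Gp subrX1. Qed.

Lemma Gp_prod m : (0 < m)%N -> Gp int m = \prod_(d <- divisors m | d != 1%N) 'Phi_d.
Proof.
move=> m0; apply: (@mulfI _ ('X - 1)); first by rewrite -Phi1 monic_neq0 // Cyclotomic_monic.
rewrite XG -Phi1 -(prod_Cyclotomic m0) (bigD1_seq 1%N) ?divisors_uniq //.
by rewrite -dvdn_divisors.
Qed.

Lemma Dp_eq k (n : 'I_k -> nat) s : (forall s, 0 < n s)%N -> Dp n = Gp int (n s) * Qs n s.
Proof.
move=> n0; rewrite Gp_prod // /Dp /Qs (bigID (fun d => d %| n s)%N) /=.
congr (_ * _).
  rewrite -big_filter -[in RHS]big_filter; apply: perm_big.
  apply: uniq_perm; rewrite ?filter_uniq ?undup_uniq ?divisors_uniq // => d.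
  rewrite !mem_filter -dvdn_divisors //.
  case ds: (d %| n s)%N; last by rewrite !andbF.
  rewrite mem_Dset //; have -> : [exists s, d %| n s]%N by apply/existsP; exists s.
  by rewrite !andbT.
by apply: eq_bigl => d; case ds: (d %| n s)%N; rewrite ?andbF ?andbT //; apply/eqP => d1; move: ds; rewrite d1 dvd1n.
Qed.

Definition Np k (n a : 'I_k -> nat) : {poly int} := \sum_(s < k) 'X^(a s) * Qs n s.

Lemma Phi_neq0 d : 'Phi_d != 0.
Proof. by rewrite monic_neq0 // Cyclotomic_monic. Qed.

Lemma Qs_neq0 k (n : 'I_k -> nat) s : Qs n s != 0.
Proof. by rewrite /Qs prodf_seq_neq0; apply/allP => d _; apply/implyP => _; apply: Phi_neq0. Qed.

Lemma Gp_horner (R : idomainType) m (x : R) : ((x - 1) * (Gp R m).[x] = x ^+ m - 1).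
Proof. by have := congr1 (horner^~ x) (XG R m); rewrite !hornerE. Qed.

Lemma size_Gp m : (0 < m)%N -> size (Gp int m) = m.
Proof.
move=> m0; have E := XG int m.
have G0 : Gp int m != 0.
  by apply/eqP => G0; move: E; rewrite G0 mulr0 => /eqP; rewrite eq_sym -size_poly_eq0 size_Xn_sub_1.
have := congr1 (fun q : {poly int} => size q) E => /=.
rewrite size_mul //; last by rewrite -size_poly_eq0 -polyC1 size_XsubC.
by rewrite -polyC1 size_XsubC size_XnsubC //= => -[].
Qed.

Lemma one_Dset k (n : 'I_k -> nat) : (0 < k)%N -> (forall s, 0 < n s)%N -> (1 \in Dset n)%N.
Proof. by move=> k0 n0; rewrite mem_Dset //; apply/existsP; exists (Ordinal k0). Qed.

Lemma size_Dp k (n : 'I_k -> nat) : (0 < k)%N -> (forall s, 0 < n s)%N ->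
  size (Dp n) = (\sum_(d <- Dset n) totient d)%N.
Proof.
move=> k0 n0; rewrite /Dp -big_filter size_prod_seq; last by move=> d _; apply: Phi_neq0.
rewrite (bigD1_seq 1%N (one_Dset k0 n0)) ?undup_uniq //= -big_filter.
under eq_bigr do rewrite size_Cyclotomic -addn1.
rewrite big_split /= sum1_size.
have -> : totient 1 = 1%N by [].
by rewrite !filter_predT big_filter -addSn addnK add1n.
Qed.

Lemma size_Np k (n a : 'I_k -> nat) : (forall s, 0 < n s)%N -> (forall s, a s < n s)%N ->
  (size (Np n a) <= size (Dp n))%N.
Proof.
move=> n0 an; rewrite /Np; apply: (leq_trans (size_sum _ _ _)).
apply/bigmax_leqP => s _.
rewrite mulrC size_mulXn ?Qs_neq0 // (@Dp_eq _ n s n0) size_mul ?Qs_neq0 //; last first.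
  by rewrite -size_poly_eq0 size_Gp // -lt0n.
rewrite size_Gp //; case: (n s) (n0 s) (an s) => // m _ am.
by rewrite addSn /= leq_add2r.
Qed.

Lemma Gp_at1 m : (Gp int m).[1] = m%:R.
Proof. by rewrite /Gp horner_sum; under eq_bigr do rewrite hornerXn expr1n; rewrite sumr_const card_ord. Qed.

Lemma Np_neq0 k (n a : 'I_k -> nat) : (0 < k)%N -> (forall s, 0 < n s)%N -> Np n a != 0.
Proof.
move=> k0 n0.
set c := (Dp n).[1].
have cE s : c = (n s)%:R * (Qs n s).[1] by rewrite /c (@Dp_eq _ n s n0) hornerM Gp_at1.
have c0 : c != 0.
  rewrite /c /Dp horner_prod prodf_seq_neq0; apply/allP => d dD; apply/implyP => d1.
  by apply: Phi_at1 => //; apply: Dset_gt0 dD.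
have pos s : 0 < c * (Qs n s).[1].
  have q0 : (Qs n s).[1] != 0 by apply: contra c0 => /eqP q0; rewrite (cE s) q0 mulr0.
  rewrite [X in X * _](cE s) -mulrA pmulr_rgt0 ?ltr0n ?n0 //.
  by rewrite lt_def mulf_neq0 //= -expr2 sqr_ge0.
apply/negP => /eqP N0.
have : c * (Np n a).[1] = 0 by rewrite N0 horner0 mulr0.
rewrite /Np horner_sum mulr_sumr (bigD1 (Ordinal k0)) //=.
have : 0 <= \sum_(i < k | i != Ordinal k0) c * ('X^(a i) * Qs n i).[1].
  by apply: sumr_ge0 => i _; rewrite hornerM hornerXn expr1n mul1r ltW.
have := pos (Ordinal k0); rewrite hornerM hornerXn expr1n mul1r.
move=> h1 h2 /eqP; rewrite paddr_eq0 ?(ltW h1) // => /andP [/eqP h4 _].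
by move: h1; rewrite h4 ltxx.
Qed.

Lemma root_Np (L : fieldType) k (n a : 'I_k -> nat) (z : L) : (forall s, 0 < n s)%N ->
  (forall s, z ^+ n s != 1) -> \sum_(s < k) z ^+ (a s) / (1 - z ^+ n s) = 0 ->
  root (map_poly (intr : int -> L) (Np n a)) z.
Proof.
move=> n0 zn H.
set c := (map_poly (intr : int -> L) (Dp n)).[z].
have QE s : (map_poly (intr : int -> L) (Qs n s)).[z] = (z - 1) * c / (z ^+ n s - 1).
  have zn1 : z ^+ n s - 1 != 0 by rewrite subr_eq0.
  apply: (mulfI zn1); rewrite [RHS]mulrC divfK //.
  rewrite /c (@Dp_eq _ n s n0) rmorphM /= hornerM mulrA; congr (_ * _).
  rewrite -Gp_horner; congr (_ * _).
  by rewrite /Gp rmorph_sum /= horner_sum [RHS]horner_sum; apply: eq_bigr => i _; rewrite map_polyXn.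
rewrite /root /Np rmorph_sum /= horner_sum.
rewrite (eq_bigr (fun s => (- ((z - 1) * c)) * (z ^+ (a s) / (1 - z ^+ n s)))).
  by rewrite -mulr_sumr H mulr0.
move=> s _; rewrite rmorphM /= map_polyXn hornerM hornerXn QE.
have zn1 : z ^+ n s - 1 != 0 by rewrite subr_eq0.
have zn2 : 1 - z ^+ n s != 0 by rewrite subr_eq0 eq_sym.
field.
by apply/andP.
Qed.

Lemma count_sum (T : Type) (p : pred T) (s : seq T) : count p s = (\sum_(i <- s) p i)%N.
Proof. by elim: s => [|x s IH]; rewrite ?big_nil ?big_cons //= IH. Qed.

Lemma undup_bound (T : eqType) (x : T) (s : seq T) :
  (size (undup s) <= size s - count_mem x s + 1)%N.
Proof.
have := count_predC (pred1 x) s => E.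
have -> : (size s - count_mem x s = count (predC (pred1 x)) s)%N.
  by rewrite -E addKn.
rewrite addn1 -(size_filter (predC (pred1 x))) -/(size (x :: _)).
apply: uniq_leq_size; first exact: undup_uniq.
move=> y; rewrite mem_undup inE mem_filter /=.
by case: (y == x).
Qed.

Lemma frac_inj (r1 d1 r2 d2 : nat) : (0 < d1)%N -> (0 < d2)%N -> coprime r1 d1 -> coprime r2 d2 ->
  (Posz r1)%:Q / (Posz d1)%:Q = (Posz r2)%:Q / (Posz d2)%:Q -> d1 = d2 /\ r1 = r2.
Proof.
move=> d10 d20 c1 c2 E.
have := congr1 denq E; rewrite !coprimeq_den //= => Ed.
have := congr1 numq E; rewrite !coprimeq_num //= => En.
move: Ed En; rewrite !gtr0_sg ?ltr0n // !mul1r !gtr0_norm ?ltr0n //.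
case: d1 d10 {c1 E} => // d1 _; case: d2 d20 {c2} => // d2 _ /= [->] [->]; done.
Qed.

Lemma totient_le k (n : 'I_k -> nat) : (forall s, 0 < n s)%N ->
  (\sum_(d <- Dset n) totient d <= Scard n)%N.
Proof.
move=> n0.
pose t d := [seq r <- iota 0 d | coprime r d].
pose M := [seq (Posz r)%:Q / (Posz d)%:Q | d <- Dset n, r <- t d].
have sM : size M = (\sum_(d <- Dset n) totient d)%N.
  rewrite size_allpairs_dep sumnE big_map; apply: eq_bigr => d _.
  rewrite size_filter count_sum totient_count_coprime /index_iota subn0.
  by apply: eq_bigr => i _; rewrite coprime_sym.
rewrite -sM /Scard /Sset; apply: uniq_leq_size.
  apply: allpairs_uniq_dep; first exact: undup_uniq.
    by move=> d _; rewrite filter_uniq // iota_uniq.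
  move=> [d1 r1] [d2 r2] /allpairsPdep [x1 [y1 [xd1 yt1 E1]]] /allpairsPdep [x2 [y2 [xd2 yt2 E2]]] /= E.
  case: E1 => e1 f1; case: E2 => e2 f2. subst.
  move: yt1 yt2; rewrite !mem_filter => /andP [c1 _] /andP [c2 _].
  have [-> ->] := frac_inj (Dset_gt0 n0 xd1) (Dset_gt0 n0 xd2) c1 c2 E; done.
move=> q /allpairsPdep [d [r [dD rt ->]]]; rewrite mem_undup.
move: rt; rewrite mem_filter mem_iota add0n => /andP [_ rd].
move: dD; rewrite mem_Dset // => /existsP [s /dvdnP [m]]; rewrite mulnC => nE.
apply/allpairsPdep; exists s, (r * m)%N; split.
- by rewrite mem_enum.
- rewrite mem_iota add0n nE ltn_pmul2r //; case: m nE => // nE.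
  by move: (n0 s); rewrite nE muln0.
- rewrite nE !PoszM !rmorphM /= invfM mulrACA divff ?mulr1 //.
  rewrite intr_eq0; case: m nE => // nE.
  by move: (n0 s); rewrite nE muln0.
Qed.

Lemma Scard_le k (n : 'I_k -> nat) : (forall s, 0 < n s)%N ->
  (Scard n <= (\sum_(s < k) n s) - k + 1)%N.
Proof.
move=> n0; rewrite /Scard /Sset.
set L := [seq _ | s <- _, r <- _].
have sL : size L = (\sum_(s < k) n s)%N.
  rewrite /L size_allpairs_dep sumnE big_map.
  rewrite big_enum /=; apply: eq_bigr => s _; by rewrite size_iota.
have c0 : (k <= count_mem (0 : rat) L)%N.
  rewrite /L /allpairs_dep count_flatten sumnE !big_map.
  apply: (@leq_trans (\sum_(j <- enum 'I_k) 1)%N); first by rewrite sum1_size size_enum_ord.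
  rewrite -enumT; apply: leq_sum => s _; case: (n s) (n0 s) => // m _.
  by rewrite /= mul0r eqxx.
rewrite -sL; apply: (leq_trans (undup_bound 0 L)); rewrite leq_add2r leq_sub2l //.
Qed.

End Alg.

Definition phi (c : C) : R[i] := Complex c.1 c.2.

Lemma phiD x y : phi (Cplus x y) = (phi x + phi y)%R.
Proof. by case: x => ? ?; case: y => ? ?. Qed.
Lemma phiM x y : phi (Cmult x y) = (phi x * phi y)%R.
Proof. by case: x => ? ?; case: y => ? ?. Qed.
Lemma phi0 : phi (RtoC (IZR 0)) = 0%R.
Proof. by []. Qed.
Lemma phi1 : phi (RtoC (IZR 1)) = 1%R.
Proof. by []. Qed.
Lemma phiN x : phi (Copp x) = (- phi x)%R.
Proof. by case: x. Qed.
Lemma phiB x y : phi (Cminus x y) = (phi x - phi y)%R.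
Proof. by rewrite /Cminus phiD phiN. Qed.
Lemma phi_inj x y : phi x = phi y -> x = y.
Proof. by case: x => ? ?; case: y => ? ? [-> ->]. Qed.
Lemma phiDiv x y : phi y != 0%R -> phi (Cdiv x y) = (phi x / phi y)%R.
Proof.
move=> y0; rewrite /Cdiv phiM; congr (_ * _)%R.
have yn0 : y <> RtoC (IZR 0) by move=> E; move: y0; rewrite E phi0 eqxx.
have := Cinv_r y yn0; move/(congr1 phi); rewrite phiM phi1 => E.
by rewrite -[phi (Cinv y)](mulKf y0) E mulr1.
Qed.


Lemma cisD a b : (phi (cis a) * phi (cis b))%R = phi (cis (a + b)).
Proof.
rewrite -phiM; congr phi; rewrite /cis /Cmult /= cos_plus sin_plus.
by congr (_, _); rewrite Rplus_comm.
Qed.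

Lemma ep_pow p m : phi (ep p m) = (phi (ep p 1) ^+ m)%R.
Proof.
elim: m => [|m IH].
  rewrite expr0 /ep /= Rmult_0_r /Rdiv Rmult_0_l /cis cos_0 sin_0; by [].
rewrite exprS -IH cisD /ep; congr (phi (cis _)).
rewrite S_INR Rmult_plus_distr_l Rdiv_plus_distr Rplus_comm; by [].
Qed.

Lemma ep_p p : (0 < p)%N -> phi (ep p p) = 1%R.
Proof.
move=> p0; have hp : INR p <> 0%R by apply: not_0_INR; move=> E; rewrite E in p0.
rewrite /ep /Rdiv Rmult_assoc Rinv_r // Rmult_1_r /cis cos_2PI sin_2PI; by [].
Qed.

Lemma ep1_neq1 p : (1 < p)%N -> phi (ep p 1) != 1%R.
Proof.
move=> p1; apply/eqP => /(congr1 (@complex.Re _)) /=.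
set t := Rdiv (Rmult (Rmult 2 PI) (INR 1)) (INR p).
have hp : Rle 2 (INR p) by have := le_INR 2 p (elimT ssrnat.leP p1); simpl; lra.
have ht : Rmult t (INR p) = Rmult 2 PI.
  rewrite /t /Rdiv Rmult_assoc Rinv_l; last by lra.
  by rewrite /= !Rmult_1_r.
have := PI_RGT_0 => hpi.
have t0 : Rlt 0 t by nra.
have tpi : Rle t PI by nra.
have := cos_decreasing_1 0 t (Rle_refl 0) (Rlt_le _ _ hpi) (Rlt_le _ _ t0) tpi t0.
rewrite cos_0 => h E; move: E; rewrite /ep /cis /phi /= -/t => E; rewrite E in h; exact: (Rlt_irrefl _ h).
Qed.

Theorem corollary1p2 (k : nat) (n a : 'I_k -> nat) (p : nat) :
  (1 <= k)%N ->
  (forall s : 'I_k, (0 < n s)%N) ->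
  (forall s : 'I_k, (a s < n s)%N) ->
  prime p ->
  (forall s : 'I_k, ~~ (p %| n s)%N) ->
  \big[Cplus/RtoC (IZR 0)]_(s < k) Cdiv (ep p (a s)) (Cminus (RtoC (IZR 1)) (ep p (n s))) = RtoC (IZR 0) ->
  ((\sum_(s < k) n s) - k + 1 >= Scard n)%N /\ (Scard n >= p)%N.
Proof.
move=> k1 n0 an pp ndiv H.
split; first exact: Scard_le n0.
set z := phi (ep p 1).
have p1 := prime_gt1 pp.
have zp : (z ^+ p = 1)%R by rewrite /z -ep_pow ep_p // prime_gt0.
have [m pm mp] := prim_order_exists (prime_gt0 pp) zp.
have pz : (p.-primitive_root z)%R.
  have [m1|m1] := eqVneq m 1%N.
    move: (prim_expr_order pm); rewrite m1 expr1 => z1.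
    by move: (ep1_neq1 p1); rewrite -/z z1 eqxx.
  by rewrite -(prime_nt_dvdP pp m1 mp).
have zn s : (z ^+ n s != 1)%R by rewrite -(prim_order_dvd pz) (negbTE (ndiv s)).
have Hsum : (\sum_(s < k) z ^+ (a s) / (1 - z ^+ n s) = 0)%R.
  have E0 := congr1 phi H.
  rewrite phi0 in E0.
  rewrite (big_morph phi phiD phi0) in E0.
  apply: (@eq_trans _ _ (\sum_(s < k) phi (Cdiv (ep p (a s)) (Cminus (RtoC (IZR 1)) (ep p (n s)))))%R _ _ E0).
  apply: eq_bigr => s _.
  have E : phi (Cminus (RtoC (IZR 1)) (ep p (n s))) = (1 - z ^+ n s)%R.
    rewrite phiB phi1 ep_pow.
    by [].
  rewrite phiDiv.
    by rewrite ep_pow -E.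
  by rewrite E subr_eq0 eq_sym; exact: zn.
have r := @root_Np _ _ n a z n0 zn Hsum.
have := irr pp pz (@Np_neq0 _ n a k1 n0) r.
move/leq_trans; apply.
apply: (leq_trans (size_Np n0 an)).
rewrite size_Dp //; exact: totient_le.
Qed.
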